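(* Let $K$ be a valued field, $d\ge 1$ and $S\subseteq K^d$ convex. (1) If $0\in S$ and $S=\operatorname{conv}(Y)$ for some finite $Y$, then $S$ is generated as an $\mathcal{O}_K$-module by a finite $K$-linearly independent set of vectors. (2) If $L$ is a valued field extension of $K$ (i.e. $K\subseteq L$ and $\nu_L$ restricted to $K$ equals $\nu_K$), then $\operatorname{conv}_{L^d}(S)\cap K^d=S$, where $\operatorname{conv}_{L^d}(S)$ denotes the convex hull of $S$ computed in $L^d$ with respect to $\mathcal{O}_L$.
   Context: For a valued field $F$ with valuation $\nu_F$, $\mathcal{O}_F=\{x\in F:\nu_F(x)\ge0\}$. A set $X\subseteq F^d$ is convex (over $F$) if it is closed under combinations $\sum_{i=1}^n\alpha_ix_i$ with $x_i\in X$, $\alpha_i\in\mathcal{O}_F$, $\sum\alpha_i=1$; $\operatorname{conv}$ denotes the smallest convex superset, i.e. the set of all such combinations. *)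

(* Defs.v *)
From HB Require Import structures.
From mathcomp Require Import all_boot all_order all_algebra.
Set Implicit Arguments. Unset Strict Implicit. Unset Printing Implicit Defensive.
Import Order.TTheory GRing.Theory.
Local Open Scope ring_scope.

Definition ordered_group (G : zmodType) (le : rel G) : Prop :=
  [/\ (forall a, le a a),
      (forall a b, le a b -> le b a -> a = b),
      (forall a b c, le a b -> le b c -> le a c),
      (forall a b, le a b || le b a)
    & (forall a b c, le a b -> le (a + c) (b + c))].

(* Order on G ∪ {∞}, ∞ represented by None (the top element). *)
Definition vle (G : zmodType) (le : rel G) (x y : option G) : bool :=
  match x, y with
  | _, None => true
  | None, Some _ => false
  | Some a, Some b => le a b
  end.

Definition vadd (G : zmodType) (x y : option G) : option G :=
  match x, y with
  | Some a, Some b => Some (a + b)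
  | _, _ => None
  end.

Definition is_valuation (F : fieldType) (G : zmodType) (le : rel G)
    (v : F -> option G) : Prop :=
  [/\ ordered_group le,
      (forall x, v x = None <-> x = 0),
      (forall x y, v (x * y) = vadd (v x) (v y))
    & (forall x y, vle le (v x) (v y) -> vle le (v x) (v (x + y)))].

Definition vring (F : fieldType) (G : zmodType) (le : rel G)
    (v : F -> option G) (x : F) : Prop := vle le (Some 0) (v x).

Definition is_convex_comb (F : fieldType) (G : zmodType) (le : rel G)
    (v : F -> option G) (d : nat) (X : 'rV[F]_d -> Prop) (z : 'rV[F]_d) : Prop :=
  exists n (x : 'I_n -> 'rV[F]_d) (a : 'I_n -> F),
    [/\ (forall i, X (x i)), (forall i, vring le v (a i)),
        \sum_(i < n) a i = 1 & z = \sum_(i < n) a i *: x i].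

Definition convex (F : fieldType) (G : zmodType) (le : rel G)
    (v : F -> option G) (d : nat) (X : 'rV[F]_d -> Prop) : Prop :=
  forall z, is_convex_comb le v X z -> X z.

Definition conv (F : fieldType) (G : zmodType) (le : rel G)
    (v : F -> option G) (d : nat) (X : 'rV[F]_d -> Prop) : 'rV[F]_d -> Prop :=
  fun z => is_convex_comb le v X z.

Definition lin_indep (F : fieldType) (d m : nat) (b : 'I_m -> 'rV[F]_d) : Prop :=
  forall c : 'I_m -> F, \sum_(i < m) c i *: b i = 0 -> forall i, c i = 0.

Definition Ospan (F : fieldType) (G : zmodType) (le : rel G)
    (v : F -> option G) (d m : nat) (b : 'I_m -> 'rV[F]_d) : 'rV[F]_d -> Prop :=
  fun z => exists c : 'I_m -> F, (forall i, vring le v (c i)) /\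
                                 z = \sum_(i < m) c i *: b i.

(* Main.v *)
Require Import Defs.
From mathcomp Require Import all_boot all_order all_algebra.
From Stdlib Require Import Classical.
Import GRing.Theory.
Local Open Scope ring_scope.
Set Implicit Arguments. Unset Strict Implicit.

Section Val.
Variables (F : fieldType) (G : zmodType) (le : rel G) (v : F -> option G).
Hypothesis hv : is_valuation le v.

Lemma og_of : ordered_group le. Proof. by case: hv. Qed.
Lemma leR a : le a a. Proof. by case: og_of. Qed.
Lemma leT a b c : le a b -> le b c -> le a c.
Proof. by case: og_of => _ _ H _ _; apply: H. Qed.
Lemma leA a b : le a b -> le b a -> a = b.
Proof. by case: og_of => _ H _ _ _; apply: H. Qed.
Arguments leA [a b].
Lemma leTot a b : le a b || le b a.
Proof. by case: og_of => _ _ _ H _; apply: H. Qed.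
Lemma leD a b c : le a b -> le (a + c) (b + c).
Proof. by case: og_of => _ _ _ _ H; apply: H. Qed.
Lemma leDl a b c : le a b -> le (c + a) (c + b).
Proof. by rewrite ![c + _]addrC; apply: leD. Qed.
Lemma le_cancel a b c : le (a + c) (b + c) -> le a b.
Proof. by move=> H; have := leD (- c) H; rewrite !addrK. Qed.

Lemma vleR x : vle le x x. Proof. by case: x => //= a; apply: leR. Qed.
Lemma vleT x y z : vle le x y -> vle le y z -> vle le x z.
Proof. by case: x; case: y; case: z => //= a b c; apply: leT. Qed.
Lemma vleTot x y : vle le x y || vle le y x.
Proof. by case: x; case: y => //= a b; apply: leTot. Qed.

Lemma v0 : v 0 = None. Proof. by case: hv => _ H _ _; apply: (proj2 (H 0)). Qed.
Lemma vNone x : v x = None -> x = 0. Proof. by case: hv => _ H _ _; apply: (proj1 (H x)). Qed.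
Arguments leT [a b c].
Arguments vleT [x y z].
Arguments le_cancel [a b c].
Lemma vM x y : v (x * y) = vadd (v x) (v y). Proof. by case: hv. Qed.
Lemma vD x y : vle le (v x) (v y) -> vle le (v x) (v (x + y)).
Proof. by case: hv => _ _ _ H; apply: H. Qed.

Arguments vD [x y].
Lemma v1 : v 1 = Some 0.
Proof.
have : v 1 = vadd (v 1) (v 1) by rewrite -vM mulr1.
case E: (v 1) => [g|] /=.
  by move=> [] /(congr1 (fun t => t - g)); rewrite addrK subrr => ->.
by move: E => /vNone /eqP; rewrite oner_eq0.
Qed.

Lemma vN1 : v (-1) = Some 0.
Proof.
have : Some 0 = vadd (v (-1)) (v (-1)) by rewrite -vM mulrNN mulr1 v1.
case E: (v (-1)) => [g|] //= [] H.
case/orP: (leTot 0 g) => H1.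
  have := leD g H1; rewrite add0r -H => H2; by rewrite (leA H2 H1).
have := leD g H1; rewrite add0r -H => H2; by rewrite (leA H1 H2).
Qed.

Lemma vN x : v (- x) = v x.
Proof. by rewrite -mulN1r vM vN1; case: (v x) => //= a; rewrite add0r. Qed.

Lemma vring1 : vring le v 1. Proof. by rewrite /vring v1 /= leR. Qed.
Lemma vring0 : vring le v 0. Proof. by rewrite /vring v0. Qed.
Lemma vringM x y : vring le v x -> vring le v y -> vring le v (x * y).
Proof.
rewrite /vring vM; case: (v x) => [a|] //; case: (v y) => [b|] //= Ha Hb.
apply: leT Ha _; have := leDl a Hb; by rewrite addr0.
Qed.
Lemma vringD x y : vring le v x -> vring le v y -> vring le v (x + y).
Proof.
case/orP: (vleTot (v x) (v y)) => H.
  rewrite /vring => Hx _; exact: vleT Hx (vD H).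
rewrite /vring => _ Hy; rewrite addrC; exact: vleT Hy (vD H).
Qed.
Lemma vringN x : vring le v x -> vring le v (- x).
Proof. by rewrite /vring vN. Qed.
Lemma vringB x y : vring le v x -> vring le v y -> vring le v (x - y).
Proof. by move=> Hx Hy; apply: vringD => //; apply: vringN. Qed.
Lemma vring_sum n (c : 'I_n -> F) :
  (forall i, vring le v (c i)) -> vring le v (\sum_i c i).
Proof.
move=> H; apply: (big_ind (vring le v)) => //; [exact: vring0 | exact: vringD].
Qed.

Lemma vring_div x c : c != 0 -> vle le (v c) (v x) -> vring le v (x / c).
Proof.
move=> c0 H; have E : x = (x / c) * c by rewrite divfK.
move: H; rewrite [in v x]E vM /vring.
case Ec: (v c) => [a|]; last by move/vNone/eqP: Ec; rewrite (negPf c0).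
case: (v (x / c)) => [g|] //= H.
apply: (@le_cancel _ _ a); by rewrite add0r.
Qed.

Lemma Ospan_comb d m (b : 'I_m -> 'rV[F]_d) n (x : 'I_n -> 'rV_d) (a : 'I_n -> F) :
  (forall i, Ospan le v b (x i)) -> (forall i, vring le v (a i)) ->
  Ospan le v b (\sum_i a i *: x i).
Proof.
move=> Hx Ha; have [c Hc] := fin_all_exists Hx.
exists (fun j => \sum_i a i * c i j); split.
  move=> j; apply: vring_sum => i; apply: vringM; [exact: Ha | exact: (proj1 (Hc i)) j].
rewrite (eq_bigr (fun i => \sum_j (a i * c i j) *: b j)); last first.
  by move=> i _; rewrite (proj2 (Hc i)) scaler_sumr; apply: eq_bigr => j _; rewrite scalerA.
rewrite exchange_big; apply: eq_bigr => j _; by rewrite scaler_suml.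
Qed.

Lemma Ospan_gen d m (b : 'I_m -> 'rV[F]_d) k : Ospan le v b (b k).
Proof.
exists (fun j => (j == k)%:R); split.
  by move=> j; case: (j == k); [exact: vring1 | exact: vring0].
rewrite (bigD1 k) //= eqxx scale1r big1 ?addr0 // => j /negPf ->; by rewrite scale0r.
Qed.

Lemma Ospan_drop d n (w : 'I_n.+1 -> 'rV[F]_d) i (e : 'I_n -> F) :
  (forall j, vring le v (e j)) -> w i = \sum_j e j *: w (lift i j) ->
  forall z, Ospan le v w z <-> Ospan le v (fun j => w (lift i j)) z.
Proof.
move=> He Hw z; split.
  case=> c [Hc ->]; exists (fun j => c i * e j + c (lift i j)); split.
    by move=> j; apply: vringD => //; apply: vringM.
  rewrite (bigD1_ord i) //= Hw scaler_sumr -big_split /=.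
  by apply: eq_bigr => j _; rewrite scalerA scalerDl.
case=> c [Hc ->]; exists (fun k => if unlift i k is Some j then c j else 0); split.
  by move=> k; case: (unlift i k) => [j|] //; exact: vring0.
rewrite (bigD1_ord i) //= unlift_none scale0r add0r.
by apply: eq_bigr => j _; rewrite liftK.
Qed.

Lemma exists_min n (g : 'I_n -> option G) (i0 : 'I_n) :
  exists i, forall j, vle le (g i) (g j).
Proof.
suff H : forall s : seq 'I_n, exists i, forall j, j \in s -> vle le (g i) (g j).
  by have [i Hi] := H (enum 'I_n); exists i => j; apply: Hi; rewrite mem_enum.
elim=> [|x s [i Hi]]; first by exists i0.
case/orP: (vleTot (g x) (g i)) => H.
  exists x => j; rewrite inE => /orP [/eqP->|/Hi]; [exact: vleR | exact: vleT].
exists i => j; rewrite inE => /orP [/eqP->|/Hi] //.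
Qed.

Lemma reduce d n (w : 'I_n -> 'rV[F]_d) :
  exists m (b : 'I_m -> 'rV[F]_d), lin_indep b /\
    forall z, Ospan le v w z <-> Ospan le v b z.
Proof.
elim: n w => [|n IH] w.
  exists 0, w; split => //; move=> c _ i; exfalso; by case: i.
case: (classic (lin_indep w)) => Hli; first by exists n.+1, w.
move/not_all_ex_not: Hli => [c Hc].
have [Hsum Hnot] := imply_to_and _ _ Hc.
move/not_all_ex_not: Hnot => [k Hk].
have [i Hi] := exists_min (fun j => v (c j)) k.
have ci0 : c i != 0.
  apply/eqP => E; have := Hi k; rewrite /= E v0.
  case E2: (v (c k)) => [g|] //= _; by apply: Hk; apply: vNone.
pose e := fun j => - (c (lift i j) / c i).
have He : forall j, vring le v (e j).
  by move=> j; apply: vringN; apply: vring_div => //; apply: Hi.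
have Hw : w i = \sum_j e j *: w (lift i j).
  move: Hsum; rewrite (bigD1_ord i) //= => /eqP; rewrite addr_eq0 => /eqP H.
  have -> : w i = (c i)^-1 *: (c i *: w i) by rewrite scalerA mulVf // scale1r.
  rewrite H scalerN scaler_sumr -sumrN; apply: eq_bigr => j _.
  by rewrite scalerA /e -scaleNr mulrC.
have [m [b [Hb Hspan]]] := IH (fun j => w (lift i j)).
exists m, b; split => // z; rewrite (Ospan_drop He Hw); exact: Hspan.
Qed.

Lemma convex_aff d (S : 'rV[F]_d -> Prop) (hS : convex le v S) s0 n
  (s : 'I_n -> 'rV_d) (e : 'I_n -> F) :
  S s0 -> (forall i, S (s i)) -> (forall i, vring le v (e i)) ->
  S (s0 + \sum_i e i *: (s i - s0)).
Proof.
move=> H0 Hs He; apply: hS.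
exists n.+1, (fun k => if unlift ord0 k is Some j then s j else s0),
  (fun k => if unlift ord0 k is Some j then e j else 1 - \sum_i e i); split.
- by move=> k; case: (unlift ord0 k).
- move=> k; case: (unlift ord0 k) => [j|]; first exact: He.
  by apply: vringB; [exact: vring1 | apply: vring_sum].
- rewrite (bigD1_ord ord0) //= unlift_none.
  under [X in _ + X]eq_bigr do rewrite liftK. by rewrite subrK.
- rewrite (bigD1_ord ord0) //= unlift_none.
  under [X in _ = _ + X]eq_bigr do rewrite liftK.
  rewrite scalerBl scale1r.
  rewrite (eq_bigr (fun i => e i *: s i - e i *: s0)); last by move=> i _; rewrite scalerBr.
  by rewrite sumrB -scaler_suml addrA addrAC.
Qed.

End Val.

Lemma transfer (K L : fieldType) (f : {rmorphism K -> L}) d m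
  (b : 'I_m -> 'rV[K]_d) (u : 'rV[K]_d) (g : 'I_m -> L) :
  lin_indep b -> map_mx f u = \sum_j g j *: map_mx f (b j) ->
  exists c : 'I_m -> K, (forall j, g j = f (c j)) /\ u = \sum_j c j *: b j.
Proof.
move=> Hb Hu.
pose B : 'M[K]_(m, d) := \matrix_j b j.
have comb : forall (R : fieldType) (cc : 'I_m -> R) (bb : 'I_m -> 'rV[R]_d),
    \sum_j cc j *: bb j = (\row_j cc j) *m (\matrix_j bb j).
  move=> R cc bb; rewrite mulmx_sum_row; apply: eq_bigr => j _; by rewrite rowK mxE.
have fB : row_free B.
  rewrite -kermx_eq0; apply/eqP/row_matrixP => i; rewrite row0.
  set r := row i (kermx B).
  have Hr : \sum_j r 0 j *: b j = 0.
    rewrite comb -/B.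
    have -> : \row_j r 0 j = r by apply/rowP => j; rewrite mxE.
    by rewrite /r -row_mul mulmx_ker row0.
  by apply/rowP => j; rewrite (Hb _ Hr j) mxE.
have [C HC] := row_freeP fB.
have HmB : map_mx f B = \matrix_j map_mx f (b j).
  by apply/row_matrixP => j; rewrite -map_row !rowK.
have Hu' : map_mx f u = (\row_j g j) *m map_mx f B by rewrite Hu comb HmB.
pose c := fun j => (u *m C) 0 j.
have Hc : map_mx f (u *m C) = \row_j g j.
  by rewrite map_mxM Hu' -mulmxA -map_mxM HC map_mx1 mulmx1.
exists c; split.
  by move=> j; have := congr1 (fun M : 'rV[L]_m => M 0 j) Hc; rewrite !mxE => <-; by rewrite /c mxE.
have -> : \sum_j c j *: b j = (u *m C) *m B.
  rewrite comb; congr (_ *m _); by apply/rowP => j; rewrite mxE.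
apply: (@map_mx_inj _ _ f); by rewrite map_mxM Hc -Hu'.
Qed.

Unset Implicit Arguments.
Theorem lemma4p2 (K : fieldType) (G : zmodType) (le : rel G)
    (vK : K -> option G) (hvK : is_valuation le vK)
    (d : nat) (hd : (0 < d)%N) (S : 'rV[K]_d -> Prop) (hS : convex le vK S) :
  (* (1) *)
  ((S 0 -> (exists Y : seq 'rV[K]_d, forall z, S z <-> conv le vK (fun y => y \in Y) z) ->
     exists m (b : 'I_m -> 'rV[K]_d),
       lin_indep b /\ forall z, S z <-> Ospan le vK b z)
  /\
  (* (2) *)
  (forall (L : fieldType) (f : {rmorphism K -> L}) (vL : L -> option G),
     is_valuation le vL -> (forall x, vL (f x) = vK x) ->
     forall z : 'rV[K]_d,
       conv le vL (fun w => exists2 s, S s & w = map_mx f s) (map_mx f z) <-> S z)).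
Proof.
split.
  move=> S0 [Y HY].
  pose yv := fun i : 'I_(size Y) => Y`_i.
  have HS : forall z, S z <-> Ospan le vK yv z.
    move=> z; split.
      move/HY => [n [x [a [Hx Ha _ ->]]]].
      apply: (Ospan_comb hvK) => // i.
      have /(nthP 0) [k hk <-] := Hx i.
      exact: (Ospan_gen hvK yv (Ordinal hk)).
    case=> c [Hc ->].
    have -> : \sum_i c i *: yv i = 0 + \sum_i c i *: (yv i - 0).
      by rewrite add0r; apply: eq_bigr => i _; rewrite subr0.
    apply: (convex_aff hvK) => // i; apply/HY.
    exists 1%N, (fun _ => yv i), (fun _ => 1); split => //.
    - by move=> _; apply: mem_nth.
    - by move=> _; exact: vring1.
    - by rewrite big_ord1.
    - by rewrite big_ord1 scale1r.
  have [m [b [Hb Hsp]]] := reduce hvK yv.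
  exists m, b; split => // z; rewrite HS; exact: Hsp.
move=> L f vL hvL hf z; split; last first.
  move=> Hz; exists 1%N, (fun _ => map_mx f z), (fun _ => 1); split => //.
  - by move=> _; exists z.
  - by move=> _; exact: vring1.
  - by rewrite big_ord1.
  - by rewrite big_ord1 scale1r.
case=> n [x [a [Hx Ha Hsum Hz]]].
case: n x a Hx Ha Hsum Hz => [|n] x a Hx Ha Hsum Hz.
  by move: Hsum; rewrite big_ord0 => /eqP; rewrite eq_sym oner_eq0.
have Hx' : forall i, exists s, S s /\ x i = map_mx f s.
  by move=> i; have [s Hs1 Hs2] := Hx i; exists s.
have [s Hs] := fin_all_exists Hx'.
pose s0 := s ord0.
pose w := fun i => s i - s0.
have [m [b [Hb Hsp]]] := reduce hvK w.
suff [e [He Hze]] : Ospan le vK w (z - s0).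
  have -> : z = s0 + (z - s0) by rewrite addrC subrK.
  rewrite Hze; apply: (convex_aff hvK) => //; first exact: (proj1 (Hs ord0)).
  by move=> i; exact: (proj1 (Hs i)).
apply/Hsp.
have HL : Ospan le vL (fun j => map_mx f (b j)) (map_mx f (z - s0)).
  have -> : map_mx f (z - s0) = \sum_i a i *: map_mx f (w i).
    rewrite map_mxB Hz.
    have -> : map_mx f s0 = (\sum_i a i) *: map_mx f s0 by rewrite Hsum scale1r.
    rewrite scaler_suml -sumrB; apply: eq_bigr => i _.
    by rewrite /w map_mxB (proj2 (Hs i)) scalerBr.
  apply: (Ospan_comb hvL) => // i.
  have [c [Hc ->]] := (proj1 (Hsp (w i))) (Ospan_gen hvK w i).
  exists (fun j => f (c j)); split.
    by move=> j; rewrite /vring hf; exact: Hc.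
  rewrite map_mx_sum; apply: eq_bigr => j _; by rewrite map_mxZ.
case: HL => g [Hg Hgz].
have [c [Hcg ->]] := transfer Hb Hgz.
exists c; split => // j; by have := Hg j; rewrite /vring Hcg hf.
Qed.
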